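(* Let $(X_n)$ be the fractionally integrated noise F($d$) with $d\in(0,1/2)$, and let $k\ge1$. Define $a_{0,k}=1$ and $(a_{1,k},\dots,a_{k,k})$ by requiring that $-\sum_{j=1}^{k}a_{j,k}X_{k+1-j}$ is the orthogonal projection in $L^2$ of $X_{k+1}$ onto $\mathrm{span}\{X_1,\dots,X_k\}$. Then for every $j\in\{1,\dots,k\}$, $$a_{j,k}<a_j<0 .$$
   Context: Fractionally integrated noise F($d$), $d\in(0,1/2)$, is the stationary solution of $X_n=(1-B)^{-d}\varepsilon_n$. Here $B$ is the backward shift and $(\varepsilon_n)_{n\in\mathbb Z}$ is a sequence of uncorrelated random variables with mean $0$ and variance $\sigma_\varepsilon^2>0$. Equivalently, $X_n=\sum_{j\ge0}b_j\varepsilon_{n-j}$ with $b_j=\frac{\Gamma(j+d)}{\Gamma(j+1)\Gamma(d)}$, and $\varepsilon_n=\sum_{j\ge0}a_jX_{n-j}$ with $a_0=1$ and $a_j=\frac{\Gamma(j-d)}{\Gamma(j+1)\Gamma(-d)}$ for $j\ge1$. *)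

(* Defs.v *)
From Stdlib Require Import Reals Lra Lia.
Open Scope R_scope.

(* MA(infinity) coefficients b_j = Gamma(j+d)/(Gamma(j+1) Gamma(d)),
   written via the Gamma recursion Gamma(x+1) = x Gamma(x):
   b_0 = 1, b_{j+1} = b_j * (j+d)/(j+1). *)
Fixpoint fin_b (d : R) (j : nat) : R :=
  match j with
  | O => 1
  | S j' => fin_b d j' * (INR j' + d) / (INR j' + 1)
  end.

(* AR(infinity) coefficients a_0 = 1, a_j = Gamma(j-d)/(Gamma(j+1) Gamma(-d)):
   a_{j+1} = a_j * (j-d)/(j+1). *)
Fixpoint fin_a (d : R) (j : nat) : R :=
  match j with
  | O => 1
  | S j' => fin_a d j' * (INR j' - d) / (INR j' + 1)
  end.

(* Autocovariance of X_n = sum_j b_j eps_{n-j} with Var(eps) = sigma2: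
   gamma(h) = Cov(X_{n+h}, X_n) = sigma2 * sum_{j>=0} b_j b_{j+h}. *)
Definition is_fin_autocov (d sigma2 : R) (gam : nat -> R) : Prop :=
  forall h : nat, infinite_sum (fun j => sigma2 * fin_b d j * fin_b d (j + h)) (gam h).

Definition absdiff (i j : nat) : nat := ((i - j) + (j - i))%nat.

(* Normal equations characterizing the L^2 orthogonal projection
   -sum_{j=1}^k a_{j,k} X_{k+1-j} of X_{k+1} onto span{X_1..X_k}:
   the residual X_{k+1} + sum_{j=1}^k a_{j,k} X_{k+1-j} is orthogonal to
   each X_{k+1-i}, i = 1..k, i.e.
   gamma(i) + sum_{j=1}^k a_{j,k} gamma(|i-j|) = 0. *)
Definition is_proj_coeffs (gam : nat -> R) (k : nat) (ak : nat -> R) : Prop :=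
  forall i : nat, (1 <= i <= k)%nat ->
    gam i + sum_f_R0 (fun m => ak (S m) * gam (absdiff i (S m))) (k - 1) = 0.

(* Main.v *)
Require Import Defs.
From Stdlib Require Import Reals Lra Lia Psatz.
Open Scope R_scope.

Lemma sum_S f N : sum_f_R0 f (S N) = sum_f_R0 f N + f (S N).
Proof. reflexivity. Qed.

Lemma fin_b_S d n : fin_b d (S n) = fin_b d n * (INR n + d) / (INR n + 1).
Proof. reflexivity. Qed.

Lemma fin_b_pos d n : 0 < d -> 0 < fin_b d n.
Proof.
  intros hd; induction n as [|n IH]; rewrite ?fin_b_S; simpl fin_b; [lra|].
  pose proof (pos_INR n).
  apply Rdiv_lt_0_compat; [apply Rmult_lt_0_compat|]; lra.
Qed.

Lemma fin_b_dec d n : 0 < d < 1 -> fin_b d (S n) <= fin_b d n.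
Proof.
  intros hd; rewrite fin_b_S. pose proof (pos_INR n). pose proof (fin_b_pos d n ltac:(lra)).
  assert (E : fin_b d n * (INR n + d) / (INR n + 1) = fin_b d n - fin_b d n * (1 - d) / (INR n + 1)) by (field; lra).
  rewrite E. assert (0 <= fin_b d n * (1 - d) / (INR n + 1)).
  { unfold Rdiv; apply Rmult_le_pos; [apply Rmult_le_pos; lra|left; apply Rinv_0_lt_compat; lra]. }
  lra.
Qed.

Lemma fin_b_anti d m n : 0 < d < 1 -> fin_b d (m + n) <= fin_b d m.
Proof.
  intros hd; induction n as [|n IH]. rewrite Nat.add_0_r; lra.
  replace (m + S n)%nat with (S (m + n)) by lia. pose proof (fin_b_dec d (m+n) hd). lra.
Qed.

Lemma E_id d s2 h N :
  (INR h + 1 - d) * sum_f_R0 (fun j => s2 * fin_b d j * fin_b d (j + S h)) N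
  - (INR h + d) * sum_f_R0 (fun j => s2 * fin_b d j * fin_b d (j + h)) N
  + s2 * INR (S N) * fin_b d (S N) * fin_b d (S N + h) = 0.
Proof.
  pose proof (pos_INR h) as Hh.
  induction N as [|N IH].
  - simpl sum_f_R0. simpl Nat.add.
    rewrite !fin_b_S. simpl fin_b. simpl INR. field. lra.
  - rewrite !sum_S. cbv beta.
    replace (S N + S h)%nat with (S (S N + h)) by lia.
    replace (S (S N) + h)%nat with (S (S N + h)) by lia.
    rewrite (fin_b_S d (S N + h)). rewrite (fin_b_S d (S N)).
    rewrite (S_INR (S N)). rewrite plus_INR.
    set (x := INR (S N)) in *. set (B1 := fin_b d (S N)) in *. set (B2 := fin_b d (S N + h)) in *.
    set (Q1 := sum_f_R0 (fun j => s2 * fin_b d j * fin_b d (j + S h)) N) in *.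
    set (Q0 := sum_f_R0 (fun j => s2 * fin_b d j * fin_b d (j + h)) N) in *.
    assert (Hx : 0 < x) by (unfold x; apply lt_0_INR; lia).
    assert (K : (INR h + 1 - d) * (s2 * B1 * (B2 * (x + INR h + d) / (x + INR h + 1)))
               - (INR h + d) * (s2 * B1 * B2)
               + s2 * (x + 1) * (B1 * (x + d) / (x + 1)) * (B2 * (x + INR h + d) / (x + INR h + 1))
               - s2 * x * B1 * B2 = 0) by (field; lra).
    lra.
Qed.

Lemma cv_const c : Un_cv (fun _ => c) c.
Proof. intros eps he; exists O; intros; unfold Rdist; rewrite Rminus_diag, Rabs_R0; lra. Qed.

Lemma tail_low d s2 m r : 0 < d < 1 -> 0 < s2 ->
  sum_f_R0 (fun j => s2 * fin_b d j * fin_b d (j + 0)) (m + r)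
  - sum_f_R0 (fun j => s2 * fin_b d j * fin_b d (j + 0)) m
  >= INR r * s2 * (fin_b d (m + r) * fin_b d (m + r)).
Proof.
  intros hd hs. induction r as [|r IH].
  - rewrite Nat.add_0_r. simpl INR. lra.
  - replace (m + S r)%nat with (S (m + r)) by lia.
    rewrite sum_S. cbv beta. rewrite Nat.add_0_r.
    pose proof (fin_b_dec d (m + r) hd). pose proof (fin_b_pos d (S (m+r)) ltac:(lra)).
    rewrite S_INR. pose proof (pos_INR r).
    assert (fin_b d (S (m+r)) * fin_b d (S (m+r)) <= fin_b d (m+r) * fin_b d (m+r)) by nra.
    assert (INR r * s2 * (fin_b d (S (m+r)) * fin_b d (S (m+r))) <= INR r * s2 * (fin_b d (m+r) * fin_b d (m+r))).
    { apply Rmult_le_compat_l; [nra|lra]. }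
    nra.
Qed.

Lemma nb2_lim d s2 l : 0 < d < 1 -> 0 < s2 ->
  infinite_sum (fun j => s2 * fin_b d j * fin_b d (j + 0)) l ->
  Un_cv (fun n => s2 * INR n * (fin_b d n * fin_b d n)) 0.
Proof.
  intros hd hs H eps he.
  destruct (H (eps / 4) ltac:(lra)) as [N0 HN0].
  exists (2 * N0)%nat. intros n hn.
  pose proof (tail_low d s2 N0 (n - N0) hd hs) as T.
  replace (N0 + (n - N0))%nat with n in T by lia.
  pose proof (HN0 n ltac:(lia)) as A1. pose proof (HN0 N0 ltac:(lia)) as A2.
  unfold Rdist in *. rewrite Rminus_0_r.
  pose proof (fin_b_pos d n ltac:(lra)).
  assert (Hr : INR n <= 2 * INR (n - N0)).
  { rewrite minus_INR by lia. assert (INR (2 * N0) <= INR n) by (apply le_INR; lia).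
    rewrite mult_INR in H1. simpl INR in H1. lra. }
  apply Rabs_def2 in A1. apply Rabs_def2 in A2.
  assert (0 <= s2 * INR n * (fin_b d n * fin_b d n)).
  { pose proof (pos_INR n). apply Rmult_le_pos; nra. }
  rewrite Rabs_right by lra.
  assert (s2 * INR n * (fin_b d n * fin_b d n) <= 2 * (INR (n - N0) * s2 * (fin_b d n * fin_b d n))).
  { assert (0 <= s2 * (fin_b d n * fin_b d n)) by nra. nra. }
  lra.
Qed.

Lemma gam_rec d s2 gam h : 0 < d < 1 -> 0 < s2 -> is_fin_autocov d s2 gam ->
  (INR h + 1 - d) * gam (S h) = (INR h + d) * gam h.
Proof.
  intros hd hs hg.
  set (U := fun N => (INR h + 1 - d) * sum_f_R0 (fun j => s2 * fin_b d j * fin_b d (j + S h)) N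
  - (INR h + d) * sum_f_R0 (fun j => s2 * fin_b d j * fin_b d (j + h)) N).
  assert (C1 : Un_cv U ((INR h + 1 - d) * gam (S h) - (INR h + d) * gam h)).
  { unfold U. apply CV_minus; apply CV_mult; try apply cv_const; apply hg. }
  assert (C2 : Un_cv U 0).
  { intros eps he. destruct (nb2_lim d s2 (gam 0%nat) hd hs (hg 0%nat) eps he) as [N0 HN0].
    exists N0. intros n hn. pose proof (HN0 (S n) ltac:(lia)) as A.
    unfold Rdist in *. rewrite Rminus_0_r in *.
    assert (EU : U n = - (s2 * INR (S n) * fin_b d (S n) * fin_b d (S n + h))).
    { pose proof (E_id d s2 h n). unfold U. lra. }
    rewrite EU, Rabs_Ropp.
    pose proof (fin_b_anti d (S n) h hd). pose proof (fin_b_pos d (S n + h) ltac:(lra)).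
    pose proof (fin_b_pos d (S n) ltac:(lra)). pose proof (pos_INR (S n)).
    assert (0 <= s2 * INR (S n)) by nra.
    assert (0 <= s2 * INR (S n) * fin_b d (S n) * fin_b d (S n + h)).
    { apply Rmult_le_pos; [apply Rmult_le_pos|]; lra. }
    rewrite Rabs_right by lra.
    rewrite Rabs_right in A by (apply Rle_ge; apply Rmult_le_pos; nra).
    assert (s2 * INR (S n) * fin_b d (S n) * fin_b d (S n + h) <= s2 * INR (S n) * (fin_b d (S n) * fin_b d (S n))).
    { rewrite Rmult_assoc. apply Rmult_le_compat_l; [lra|]. apply Rmult_le_compat_l; lra. }
    lra. }
  pose proof (UL_sequence U _ _ C1 C2). lra.
Qed.

Lemma sum_scal_l x An N : sum_f_R0 (fun i => x * An i) N = x * sum_f_R0 An N.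
Proof. rewrite scal_sum. apply sum_eq; intros; ring. Qed.

Lemma sum_swap (F : nat -> nat -> R) n N :
  sum_f_R0 (fun t => sum_f_R0 (fun p => F t p) n) N
  = sum_f_R0 (fun p => sum_f_R0 (fun t => F t p) N) n.
Proof.
  induction N as [|N IH]; [reflexivity|].
  rewrite sum_S, IH. rewrite <- plus_sum. apply sum_eq; intros; reflexivity.
Qed.

Lemma sum_zero_before f n : (forall p, (p < n)%nat -> f p = 0) -> sum_f_R0 f n = f n.
Proof.
  destruct n as [|n]; intros H; [reflexivity|].
  rewrite sum_S, sum_eq_R0; [ring|]. intros; apply H; lia.
Qed.

Lemma sum_ge_first f N : (forall t, 0 <= f t) -> f 0%nat <= sum_f_R0 f N.
Proof.
  intros H; induction N as [|N IH]; simpl; [lra|]. pose proof (H (S N)); lra.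
Qed.

Lemma cv_sum (U : nat -> nat -> R) (l w : nat -> R) n :
  (forall p, (p <= n)%nat -> Un_cv (U p) (l p)) ->
  Un_cv (fun N => sum_f_R0 (fun p => w p * U p N) n) (sum_f_R0 (fun p => w p * l p) n).
Proof.
  induction n as [|n IH]; intros H.
  - simpl. apply CV_mult; [apply cv_const|apply H; lia].
  - simpl. apply CV_plus; [apply IH; intros; apply H; lia|].
    apply CV_mult; [apply cv_const|apply H; lia].
Qed.

Lemma shift_sum f l s : infinite_sum f l ->
  infinite_sum (fun t => if (s <=? t)%nat then f (t - s)%nat else 0) l.
Proof.
  intros H.
  assert (P : forall r, sum_f_R0 (fun t => if (s <=? t)%nat then f (t - s)%nat else 0) (s + r) = sum_f_R0 f r).
  { induction r as [|r IH].
    - rewrite Nat.add_0_r, sum_zero_before.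
      + rewrite Nat.leb_refl, Nat.sub_diag. reflexivity.
      + intros p hp. destruct (Nat.leb_spec s p); [lia|reflexivity].
    - replace (s + S r)%nat with (S (s + r)) by lia. rewrite !sum_S, IH.
      destruct (Nat.leb_spec s (S (s + r))); [|lia].
      replace (S (s + r) - s)%nat with (S r) by lia. reflexivity. }
  intros eps he. destruct (H eps he) as [N0 HN0]. exists (N0 + s)%nat.
  intros n hn. replace n with (s + (n - s))%nat by lia. rewrite P. apply HN0. lia.
Qed.

Definition absd_spec i j : absdiff i j = (if (j <=? i)%nat then (i - j) else (j - i))%nat.
Proof. unfold absdiff. destruct (Nat.leb_spec j i); lia. Qed.

Lemma absdiff_sym i j : absdiff i j = absdiff j i.
Proof. unfold absdiff; lia. Qed.

Definition Bf d n t p := if (n <=? p + t)%nat then fin_b d (p + t - n) else 0.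

Lemma inner_cv d s2 gam n p q : is_fin_autocov d s2 gam -> (p <= n)%nat -> (q <= n)%nat ->
  Un_cv (fun N => sum_f_R0 (fun t => s2 * Bf d n t p * Bf d n t q) N) (gam (absdiff p q)).
Proof.
  intros hg.
  assert (W : forall p q, (p <= q)%nat -> (q <= n)%nat ->
     Un_cv (fun N => sum_f_R0 (fun t => s2 * Bf d n t p * Bf d n t q) N) (gam (absdiff p q))).
  { clear p q. intros p q hpq hq.
    pose proof (shift_sum _ _ (n - p)%nat (hg (q - p)%nat)) as S.
    replace (absdiff p q) with (q - p)%nat by (unfold absdiff; lia).
    intros eps he. destruct (S eps he) as [N0 HN0]. exists N0. intros m hm.
    rewrite <- (sum_eq (fun t => if (n - p <=? t)%nat then s2 * fin_b d (t - (n - p)) * fin_b d (t - (n - p) + (q - p)) else 0)).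
    - apply HN0; lia.
    - intros t _. unfold Bf. destruct (Nat.leb_spec (n - p) t), (Nat.leb_spec n (p + t)), (Nat.leb_spec n (q + t)); try lia.
      + replace (p + t - n)%nat with (t - (n - p))%nat by lia.
        replace (q + t - n)%nat with (t - (n - p) + (q - p))%nat by lia. reflexivity.
      + ring. + ring. }
  intros hp hq. destruct (Nat.le_gt_cases p q).
  - apply W; auto.
  - rewrite absdiff_sym. intros eps he. destruct (W q p ltac:(lia) hp eps he) as [N0 HN0].
    exists N0. intros m hm. erewrite sum_eq; [apply HN0; auto|]. intros; simpl; ring.
Qed.

Lemma key_pd d s2 gam n c : 0 < d < 1 -> 0 < s2 -> is_fin_autocov d s2 gam ->
  s2 * (c n * c n) <= sum_f_R0 (fun p => c p * sum_f_R0 (fun q => c q * gam (absdiff p q)) n) n.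
Proof.
  intros hd hs hg.
  set (y := fun t => sum_f_R0 (fun p => c p * Bf d n t p) n).
  assert (Y0 : y 0%nat = c n).
  { unfold y. rewrite sum_zero_before.
    - unfold Bf. rewrite Nat.add_0_r, Nat.leb_refl, Nat.sub_diag. simpl. ring.
    - intros p hp. unfold Bf. destruct (Nat.leb_spec n (p + 0)); [lia|ring]. }
  assert (E : forall N, sum_f_R0 (fun t => s2 * (y t * y t)) N =
     sum_f_R0 (fun p => c p * sum_f_R0 (fun q => c q * sum_f_R0 (fun t => s2 * Bf d n t p * Bf d n t q) N) n) n).
  { intros N.
    transitivity (sum_f_R0 (fun t => sum_f_R0 (fun p => c p * sum_f_R0 (fun q => c q * (s2 * Bf d n t p * Bf d n t q)) n) n) N).
    - apply sum_eq; intros t _.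
      replace (s2 * (y t * y t)) with ((s2 * y t) * y t) by ring.
      unfold y at 2. rewrite scal_sum. apply sum_eq; intros p _. unfold y.
      repeat rewrite <- sum_scal_l. apply sum_eq; intros q _. ring.
    - rewrite (sum_swap (fun t p => c p * sum_f_R0 (fun q => c q * (s2 * Bf d n t p * Bf d n t q)) n)).
      apply sum_eq; intros p _.
      rewrite (sum_scal_l (c p) (fun t => sum_f_R0 (fun q => c q * (s2 * Bf d n t p * Bf d n t q)) n)).
      f_equal. rewrite (sum_swap (fun t q => c q * (s2 * Bf d n t p * Bf d n t q))).
      apply sum_eq; intros q _.
      rewrite (sum_scal_l (c q) (fun t => s2 * Bf d n t p * Bf d n t q)). reflexivity. }
  assert (CV : Un_cv (fun N => sum_f_R0 (fun t => s2 * (y t * y t)) N)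
     (sum_f_R0 (fun p => c p * sum_f_R0 (fun q => c q * gam (absdiff p q)) n) n)).
  { intros eps he. 
    assert (C : Un_cv (fun N => sum_f_R0 (fun p => c p * sum_f_R0 (fun q => c q * sum_f_R0 (fun t => s2 * Bf d n t p * Bf d n t q) N) n) n)
      (sum_f_R0 (fun p => c p * sum_f_R0 (fun q => c q * gam (absdiff p q)) n) n)).
    { apply (cv_sum (fun p N => sum_f_R0 (fun q => c q * sum_f_R0 (fun t => s2 * Bf d n t p * Bf d n t q) N) n)).
      intros p hp. apply (cv_sum (fun q N => sum_f_R0 (fun t => s2 * Bf d n t p * Bf d n t q) N)).
      intros q hq. apply inner_cv; auto. }
    destruct (C eps he) as [N0 HN0]. exists N0; intros m hm. rewrite E. apply HN0; auto. }
  apply (Rle_cv_lim (Un := fun _ => s2 * (c n * c n)) (Vn := fun N => sum_f_R0 (fun t => s2 * (y t * y t)) N)).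
  - intros N. rewrite <- Y0. apply (sum_ge_first (fun t => s2 * (y t * y t))). intros t.
    apply Rmult_le_pos; [lra|]. apply Rle_0_sqr.
  - apply cv_const.
  - exact CV.
Qed.

Lemma sq0 s2 x : 0 < s2 -> s2 * (x * x) <= 0 -> x = 0.
Proof.
  intros hs h. destruct (Req_dec x 0) as [|hx]; auto.
  pose proof (Rsqr_pos_lt x hx). unfold Rsqr in *. exfalso. nra.
Qed.

Lemma pd_unique d s2 gam n c : 0 < d < 1 -> 0 < s2 -> is_fin_autocov d s2 gam ->
  (forall p, (p <= n)%nat -> sum_f_R0 (fun q => c q * gam (absdiff p q)) n = 0) ->
  forall q, (q <= n)%nat -> c q = 0.
Proof.
  intros hd hs hg. induction n as [|n IH]; intros H q hq.
  - pose proof (key_pd d s2 gam 0 c hd hs hg). rewrite sum_eq_R0 in H0.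
    + assert (c 0%nat = 0) by (apply (sq0 s2); auto). replace q with 0%nat by lia. auto.
    + intros p hp. rewrite H by lia. ring.
  - pose proof (key_pd d s2 gam (S n) c hd hs hg) as K. rewrite sum_eq_R0 in K.
    2:{ intros p hp. rewrite H by lia. ring. }
    assert (cn : c (S n) = 0) by (apply (sq0 s2); auto).
    destruct (Nat.eq_dec q (S n)) as [->|]; auto.
    apply IH; [|lia]. intros p hp. specialize (H p ltac:(lia)). rewrite sum_S, cn in H. lra.
Qed.

Fixpoint fin_p (d : R) (k j : nat) : R :=
  match j with
  | O => 1
  | S j' => fin_p d k j' * (INR k - INR j') * (INR j' - d) / ((INR j' + 1) * (INR k - INR j' - d))
  end.

Lemma kjd_neq d k j : 0 < d < 1 -> INR k - INR j - d <> 0.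
Proof.
  intros hd. destruct (Nat.le_gt_cases k j).
  - pose proof (le_INR _ _ H). lra.
  - assert (INR (S j) <= INR k) by (apply le_INR; lia). rewrite S_INR in H0. lra.
Qed.

Lemma L_g d s2 gam i j : 0 < d < 1 -> 0 < s2 -> is_fin_autocov d s2 gam ->
  (INR i - INR j + 1 - d) * gam (absdiff (S i) j) = (INR i - INR j + d) * gam (absdiff i j).
Proof.
  intros hd hs hg. destruct (Nat.le_gt_cases j i).
  - replace (absdiff (S i) j) with (S (i - j)) by (unfold absdiff; lia).
    replace (absdiff i j) with (i - j)%nat by (unfold absdiff; lia).
    pose proof (gam_rec d s2 gam (i - j) hd hs hg). rewrite minus_INR in H0 by lia. lra.
  - replace (absdiff (S i) j) with (j - S i)%nat by (unfold absdiff; lia).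
    replace (absdiff i j) with (S (j - S i)) by (unfold absdiff; lia).
    pose proof (gam_rec d s2 gam (j - S i) hd hs hg). rewrite minus_INR in H0 by lia.
    rewrite S_INR in H0. lra.
Qed.

Lemma telescope f n : sum_f_R0 (fun j => f (S j) - f j) n = f (S n) - f 0%nat.
Proof. induction n as [|n IH]; [reflexivity|]. rewrite sum_S, IH. ring. Qed.

Definition Rres gam d k i := sum_f_R0 (fun j => fin_p d k j * gam (absdiff i j)) k.

Lemma R_rec d s2 gam k i : 0 < d < 1 -> 0 < s2 -> is_fin_autocov d s2 gam ->
  (INR i - INR k) * (INR i + 1 - d) * Rres gam d k (S i) - INR i * (INR i - INR k + d) * Rres gam d k i = 0.
Proof.
  intros hd hs hg.
  set (H := fun j => INR j * (INR k - INR j + 1 - d) * fin_p d k j * gam (absdiff (S i) j)).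
  assert (T : forall j, (INR i - INR k) * (INR i + 1 - d) * (fin_p d k j * gam (absdiff (S i) j))
     - INR i * (INR i - INR k + d) * (fin_p d k j * gam (absdiff i j)) = H (S j) - H j).
  { intros j. unfold H. change (absdiff (S i) (S j)) with (absdiff i j).
    cbn [fin_p]. rewrite S_INR.
    pose proof (kjd_neq d k j hd). pose proof (pos_INR j).
    pose proof (L_g d s2 gam i j hd hs hg) as L.
    set (G0 := gam (absdiff i j)) in *. set (G1 := gam (absdiff (S i) j)) in *.
    set (a := fin_p d k j).
    transitivity (a * (INR i + INR j - INR k) * ((INR i - INR j + 1 - d) * G1 - (INR i - INR j + d) * G0)
       + (INR k - INR j) * (INR j - d) * a * G0 - INR j * (INR k - INR j + 1 - d) * a * G1).
    - ring.
    - rewrite L. field. split; lra. }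
  unfold Rres. rewrite !scal_sum. rewrite <- minus_sum.
  transitivity (sum_f_R0 (fun j => H (S j) - H j) k).
  - apply sum_eq; intros j _. rewrite <- T. ring.
  - rewrite telescope. unfold H. cbn [fin_p]. rewrite Rminus_diag. change (INR 0) with 0. unfold Rdiv. ring.
Qed.

Fixpoint fin_r (d : R) (k j : nat) : R :=
  match j with
  | O => 1
  | S j' => fin_r d k j' * (INR k - INR j') / (INR k - INR j' - d)
  end.

Lemma p_eq d k j : 0 < d < 1 -> fin_p d k j = fin_a d j * fin_r d k j.
Proof.
  intros hd. induction j as [|j IH]; [simpl; ring|].
  cbn [fin_p fin_a fin_r]. rewrite IH. pose proof (kjd_neq d k j hd). pose proof (pos_INR j).
  field; lra.
Qed.

Lemma r_gt d k j : 0 < d < 1 -> (j <= k)%nat -> 1 <= fin_r d k j /\ ((1 <= j)%nat -> 1 < fin_r d k j).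
Proof.
  intros hd. induction j as [|j IH]; intros hj.
  - simpl. split; [lra|lia].
  - destruct (IH ltac:(lia)) as [I1 I2]. cbn [fin_r].
    assert (INR (S j) <= INR k) by (apply le_INR; lia). rewrite S_INR in H.
    assert (Q : 1 < (INR k - INR j) / (INR k - INR j - d)).
    { apply (Rmult_lt_reg_r (INR k - INR j - d)); [lra|]. unfold Rdiv.
      rewrite Rmult_assoc, Rinv_l by lra. lra. }
    assert (E : fin_r d k j * (INR k - INR j) / (INR k - INR j - d) = fin_r d k j * ((INR k - INR j) / (INR k - INR j - d))) by (unfold Rdiv; ring).
    rewrite E. split; intros; nra.
Qed.

Lemma a_neg d j : 0 < d < 1 -> (1 <= j)%nat -> fin_a d j < 0.
Proof.
  intros hd. induction j as [|j IH]; intros hj; [lia|].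
  cbn [fin_a]. destruct j as [|j].
  - simpl. lra.
  - assert (A := IH ltac:(lia)). pose proof (pos_INR j). rewrite S_INR.
    assert (E : fin_a d (S j) * (INR j + 1 - d) / (INR j + 1 + 1) = fin_a d (S j) * ((INR j + 1 - d) / (INR j + 1 + 1))) by (unfold Rdiv; ring).
    rewrite E. assert (0 < (INR j + 1 - d) / (INR j + 1 + 1)) by (apply Rdiv_lt_0_compat; lra). nra.
Qed.

Lemma Rres_zero d s2 gam k i : 0 < d < 1 -> 0 < s2 -> is_fin_autocov d s2 gam -> (1 <= k)%nat ->
  (1 <= i <= k)%nat -> Rres gam d k i = 0.
Proof.
  intros hd hs hg hk. induction i as [|i IH]; intros hi; [lia|].
  pose proof (R_rec d s2 gam k i hd hs hg) as R.
  assert (Hk : INR 1 <= INR k) by (apply le_INR; lia). simpl INR in Hk.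
  destruct (Nat.eq_dec i 0) as [->|ne].
  - simpl INR in R. assert ((0 - INR k) * (0 + 1 - d) <> 0) by (apply Rmult_integral_contrapositive; split; lra).
    apply (Rmult_eq_reg_l ((0 - INR k) * (0 + 1 - d))); [|auto]. lra.
  - rewrite IH in R by lia.
    assert (INR (S i) <= INR k) by (apply le_INR; lia). rewrite S_INR in H. pose proof (pos_INR i).
    assert ((INR i - INR k) * (INR i + 1 - d) <> 0) by (apply Rmult_integral_contrapositive; split; lra).
    apply (Rmult_eq_reg_l ((INR i - INR k) * (INR i + 1 - d))); [|auto]. lra.
Qed.

Theorem mainTheorem6 (d sigma2 : R) (gam : nat -> R) (k : nat) (ak : nat -> R)
  (hd : 0 < d < 1/2) (hs : 0 < sigma2)
  (hgam : is_fin_autocov d sigma2 gam)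
  (hk : (1 <= k)%nat)
  (hproj : is_proj_coeffs gam k ak) :
  forall j : nat, (1 <= j <= k)%nat -> ak j < fin_a d j /\ fin_a d j < 0.
Proof.
  assert (hd' : 0 < d < 1) by lra.
  assert (Rform : forall i, (1 <= i <= k)%nat ->
     gam i + sum_f_R0 (fun m => fin_p d k (S m) * gam (absdiff i (S m))) (k - 1) = 0).
  { intros i hi. rewrite <- (Rres_zero d sigma2 gam k i hd' hs hgam hk hi). unfold Rres.
    rewrite (decomp_sum _ k) by lia. replace (Init.Nat.pred k) with (k - 1)%nat by lia.
    replace (absdiff i 0) with i by (unfold absdiff; lia). simpl fin_p. ring. }
  set (c := fun m => ak (S m) - fin_p d k (S m)).
  assert (C0 : forall q, (q <= k - 1)%nat -> c q = 0).
  { apply (pd_unique d sigma2 gam (k - 1) c hd' hs hgam). intros p hp.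
    pose proof (hproj (S p) ltac:(lia)) as H1. pose proof (Rform (S p) ltac:(lia)) as H2.
    unfold c. transitivity (sum_f_R0 (fun m => ak (S m) * gam (absdiff (S p) (S m))) (k - 1)
       - sum_f_R0 (fun m => fin_p d k (S m) * gam (absdiff (S p) (S m))) (k - 1)).
    - rewrite <- minus_sum. apply sum_eq; intros; simpl absdiff. change (absdiff (S p) (S i)) with (absdiff p i). ring.
    - lra. }
  intros j hj.
  assert (Ej : ak j = fin_p d k j).
  { destruct j as [|j]; [lia|]. pose proof (C0 j ltac:(lia)). unfold c in H. lra. }
  rewrite Ej, p_eq by lra.
  pose proof (a_neg d j hd' ltac:(lia)). destruct (r_gt d k j hd' ltac:(lia)) as [_ R].
  specialize (R ltac:(lia)). split; nra.
Qed.
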